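(* Let $c$ be a cost function, $\alpha_i>0$, $m_i$ measures on $\mathbb{R}^n$, and let $(\Phi_1,\dots,\Phi_N)$ be an admissible tuple maximizing $\mathcal{BS}_{\alpha,m}$ over all admissible tuples, with $0<\int e^{-\alpha_i\Phi_i}dm_i<\infty$ for all $i$. Let $\mu_i=e^{-\alpha_i\Phi_i}m_i/\int e^{-\alpha_i\Phi_i}dm_i$ and assume the Kantorovich duality holds for $(c;\mu_1,\dots,\mu_N)$. Then $(\Phi_1,\dots,\Phi_N)$ is a minimizer of the dual transportation problem for $c$ and $\mu_1,\dots,\mu_N$.
   Context: Points of $(\mathbb{R}^n)^N$ are written $x=(x_1,\dots,x_N)$, $x_i\in\mathbb{R}^n$. A tuple $(V_1,\dots,V_N)$ of functions $V_i:\mathbb{R}^n\to(-\infty,+\infty]$ is admissible (for the cost $c$) if $\sum_{i=1}^N V_i(x_i)\ge c(x)$ for all $x$. $\mathcal{BS}_{\alpha,m}(V_1,\dots,V_N)=\prod_{i=1}^N\bigl(\int_{\mathbb{R}^n}e^{-\alpha_iV_i}dm_i\bigr)^{1/\alpha_i}$. Kantorovich duality: for probability measures $\mu_1,\dots,\mu_N$, the primal problem is to maximize $\int c\,d\pi$ over probability measures $\pi$ on $(\mathbb{R}^n)^N$ with marginals $\mu_i$; the dual problem is to minimize $\sum_i\int f_i\,d\mu_i$ over admissible tuples $(f_i)$ with $f_i\in L^1(\mu_i)$. The Kantorovich duality holds for $(c;\mu_1,\dots,\mu_N)$ if the primal problem has a maximizer, the dual problem has a minimizer, and the two optimal values are equal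 and finite. *)

(* Defs.v *)
From HB Require Import structures.
From mathcomp Require Import all_boot all_order all_algebra.
From mathcomp Require Import all_classical all_reals all_analysis.
From mathcomp Require Import measurable_realfun.
Set Implicit Arguments. Unset Strict Implicit. Unset Printing Implicit Defensive.
Import Order.TTheory GRing.Theory Num.Theory.
Local Open Scope classical_set_scope.
Local Open Scope ring_scope.

(* R^n is modelled as [n.-tuple R] with its product (Borel) sigma-algebra;
   (R^n)^N as [N.-tuple (n.-tuple R)], and x_i is [tnth x i]. *)

Section Defs.
Local Open Scope ereal_scope.
Context {R : realType} (n N : nat).
Notation X := (n.-tuple R).
Notation XN := (N.-tuple (n.-tuple R)).

Definition admissible (c : XN -> \bar R) (V : 'I_N -> X -> \bar R) : Prop :=
  (forall i x, V i x != -oo) /\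
  (forall x : XN, c x <= \sum_(i < N) V i (tnth x i)).

Definition Zint (alpha : 'I_N -> R) (m : 'I_N -> {measure set X -> \bar R})
    (V : 'I_N -> X -> \bar R) (i : 'I_N) : \bar R :=
  \int[m i]_x expeR (- ((alpha i)%:E * V i x)).

Definition BS (alpha : 'I_N -> R) (m : 'I_N -> {measure set X -> \bar R})
    (V : 'I_N -> X -> \bar R) : \bar R :=
  \prod_(i < N) poweR (Zint alpha m V i) (alpha i)^-1.

Definition has_marginals (pi : probability XN R) (mu : 'I_N -> probability X R)
  : Prop :=
  forall (i : 'I_N) (A : set X), measurable A ->
    pi ((fun x : XN => tnth x i) @^-1` A) = mu i A.

Definition primal_value (c : XN -> \bar R) (pi : probability XN R) : \bar R :=
  \int[pi]_x c x.

Definition primal_maximizer (c : XN -> \bar R) (mu : 'I_N -> probability X R)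
    (pi : probability XN R) : Prop :=
  has_marginals pi mu /\
  forall pi' : probability XN R, has_marginals pi' mu ->
    primal_value c pi' <= primal_value c pi.

Definition dual_feasible (c : XN -> \bar R) (mu : 'I_N -> probability X R)
    (f : 'I_N -> X -> \bar R) : Prop :=
  admissible c f /\ forall i, (mu i).-integrable setT (f i).

Definition dual_value (mu : 'I_N -> probability X R)
    (f : 'I_N -> X -> \bar R) : \bar R :=
  \sum_(i < N) \int[mu i]_x f i x.

Definition dual_minimizer (c : XN -> \bar R) (mu : 'I_N -> probability X R)
    (f : 'I_N -> X -> \bar R) : Prop :=
  dual_feasible c mu f /\
  forall g, dual_feasible c mu g -> dual_value mu f <= dual_value mu g.

Definition kantorovich_duality (c : XN -> \bar R)
    (mu : 'I_N -> probability X R) : Prop :=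
  exists (pi : probability XN R) (f : 'I_N -> X -> \bar R),
    [/\ primal_maximizer c mu pi, dual_minimizer c mu f,
        primal_value c pi = dual_value mu f &
        primal_value c pi \is a fin_num].

End Defs.

(* Main.v *)
Require Import Defs.
From HB Require Import structures.
From mathcomp Require Import all_boot all_order all_algebra.
From mathcomp Require Import all_classical all_reals all_analysis.
From mathcomp Require Import measurable_realfun.
Import Order.TTheory GRing.Theory Num.Theory.
Local Open Scope classical_set_scope.
Local Open Scope ring_scope.

Section dens.
Local Open Scope ereal_scope.
Context d (T : measurableType d) (R : realType).
Variables (mu nu : {measure set T -> \bar R}) (g : T -> \bar R).
Hypotheses (g0 : forall x, 0 <= g x) (gfin : forall x, g x \is a fin_num)
  (mg : measurable_fun setT g)
  (H : forall A, measurable A -> nu A = \int[mu]_(x in A) g x).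
Import HBNNSimple.

Lemma density_integral f E : (forall x, 0 <= f x) ->
    measurable E -> measurable_fun E f ->
  \int[mu]_(x in E) (f x * g x) = \int[nu]_(x in E) f x.
Proof.
move=> f0 mE mf.
pose h := nnsfun_approx mE mf.
have -> : \int[nu]_(x in E) f x =
    lim (\int[nu]_(x in E) (EFin \o h n) x @[n --> \oo]).
  have fE x : E x -> f x = lim ((EFin \o h n) x @[n --> \oo]).
    by move=> Ex; apply/esym/cvg_lim => //; exact: cvg_nnsfun_approx.
  under eq_integral => x /[!inE] /fE -> //.
  apply: monotone_convergence => //.
  - move=> n; apply/measurable_EFinP.
    by apply: (measurable_funS measurableT) => //; exact/measurable_funP.
  - by move=> n x Ex //=; rewrite lee_fin.
  - by move=> x Ex a b ab; rewrite lee_fin; exact/lefP/nd_nnsfun_approx.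
have -> : \int[mu]_(x in E) (f \* g) x =
    lim (\int[mu]_(x in E) ((EFin \o h n) \* g) x @[n --> \oo]).
  have fg x : E x -> f x * g x = lim (((EFin \o h n) \* g) x @[n --> \oo]).
    by move=> Ex; apply/esym/cvg_lim => //; apply: cvgeZr;
      [exact: gfin|exact: cvg_nnsfun_approx].
  under eq_integral => x /[!inE] /fg -> //.
  apply: monotone_convergence => [//| | |].
  - move=> n; apply/emeasurable_funM; apply/measurable_funTS.
      exact/measurable_EFinP.
    exact: mg.
  - by move=> n x Ex /=; rewrite mule_ge0 ?lee_fin ?g0.
  - by move=> x Ex a b ab/=; rewrite lee_wpmul2r ?lee_fin ?g0//; exact/lefP/nd_nnsfun_approx.
suff suf n : \int[mu]_(x in E) ((EFin \o h n) x * g x) =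
    \int[nu]_(x in E) (EFin \o h n) x.
  by under eq_fun do rewrite suf.
transitivity (\int[nu]_(x in E)
   (\sum_(y \in range (h n)) (y * \1_(h n @^-1` [set y]) x)%:E)); last first.
  by apply: eq_integral => t tE; rewrite /= fimfunE -fsumEFin.
have indich m r : measurable_fun E (fun x => (r * \1_(h m @^-1` [set r]) x)%:E).
  by apply: (measurable_comp measurableT) => //; exact: measurable_funM.
rewrite ge0_integral_fsum//; last by move=> m y Ey; exact: nnfun_muleindic_ge0.
transitivity (\int[mu]_(x in E) (\sum_(y \in range (h n))
    (y * \1_(h n @^-1` [set y]) x)%:E * g x)).
  under [RHS]eq_integral => x xE.
    rewrite -ge0_mule_fsuml => [|y]; last exact: nnfun_muleindic_ge0.
    rewrite fsumEFin // -(fimfunE _ x); over.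
  by [].
rewrite ge0_integral_fsum//; last 2 first.
  - move=> y; apply: emeasurable_funM => //; apply: measurable_funTS.
    exact: mg.
  - by move=> m y Ey; rewrite mule_ge0 ?g0// nnfun_muleindic_ge0.
apply: eq_fsbigr => r rhn.
under [RHS]eq_integral do rewrite EFinM.
rewrite integralZl_indic_nnsfun => //.
under eq_integral do rewrite EFinM -muleA.
rewrite ge0_integralZl//.
- under eq_integral do rewrite muleC.
  rewrite (eq_integral (g \_ (h n @^-1` [set r]))); last first.
    by move=> x xE; rewrite epatch_indic.
  by rewrite -integral_mkcondr -H// integral_indic// setIC.
- apply: emeasurable_funM; first exact/measurable_EFinP.
  exact/measurable_funTS/mg.
- by move=> t Et; rewrite mule_ge0 ?lee_fin ?g0.
- by move: rhn; rewrite inE => -[t _ <-]; rewrite lee_fin.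
Qed.
End dens.
Lemma measurable_expeR (R : realType) : measurable_fun [set: \bar R] expeR.
Proof.
rewrite (_ : expeR = fun x => if x \is a fin_num then (expR (fine x))%:E
   else if x == +oo then +oo else 0)%E; last by apply: funext => -[].
apply: measurable_fun_ifT.
- by apply: (measurable_fun_bool true); rewrite setTI;
     have := emeasurable_fin_num measurableT (@measurable_id _ (\bar R) setT); rewrite setTI.
- apply/measurable_EFinP; apply: measurableT_comp; first exact: measurable_expR.
  exact: fine_measurable.
- apply: measurable_fun_ifT => //.
  apply: (measurable_fun_bool true); rewrite setTI.
  rewrite (_ : _ @^-1` _ = [set +oo%E]); first exact: emeasurable_set1.
  by apply/seteqP; split => x /=; [move/eqP|move=> ->].
Qed.


From mathcomp Require Import ring lra.

Section ebounds.
Local Open Scope ereal_scope.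
Context (R : realType).

Lemma ebound1 (a : R) (p q : \bar R) : (0 < a)%R -> p != -oo -> q != -oo ->
  maxe p 0 <= maxe q 0 + (a^-1)%:E * expeR (a%:E * p - a%:E * q).
Proof.
move=> a0; case: p => [r| |] // _; case: q => [s| |] // _.
  rewrite -!EFinM -!EFin_max -EFinD lee_fin.
  have h := expR_ge1Dx (a * r - a * s).
  have h2 : (a^-1 + r - s <= a^-1 * expR (a * r - a * s))%R.
    have -> : (a^-1 + r - s = a^-1 * (1 + (a * r - a * s)))%R.
      by rewrite mulrDr mulr1 mulrBr !mulrA mulVf ?gt_eqF// !mul1r addrA.
    by rewrite ler_wpM2l// invr_ge0 ltW.
  have h3 : (0 <= a^-1 * expR (a * r - a * s))%R.
    by rewrite mulr_ge0 ?expR_ge0// invr_ge0 ltW.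
  have h4 : (0 < a^-1)%R by rewrite invr_gt0.
  rewrite ge_max; apply/andP; split.
    have hs : (s <= Num.max s 0)%R by rewrite le_max lexx.
    lra.
  by rewrite addr_ge0// le_max lexx orbT.
- rewrite maxye addye ?leey// gt_eqF// (lt_le_trans ltNy0)//.
  by rewrite mule_ge0 ?expeR_ge0// lee_fin invr_ge0 ltW.
- rewrite maxye gt0_muley ?lte_fin// -EFinM /= gt0_muley ?lte_fin ?invr_gt0//.
  by rewrite addey ?leey// -EFin_max.
- by rewrite maxye addye ?leey// gt_eqF// (lt_le_trans ltNy0)//
    mule_ge0 ?expeR_ge0// lee_fin invr_ge0 ltW.
Qed.

Lemma ebound2 (p T c : \bar R) : p != -oo -> 0 <= T -> c <= p + T ->
  maxe (- p) 0 <= maxe (- c) 0 + T.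
Proof.
move=> pNy T0 cpT.
have [p0|p0] := leP 0 p.
  by rewrite (_ : maxe (- p) 0 = 0) ?adde_ge0 ?le_max ?lexx ?orbT// ;
     apply/max_idPr; rewrite leeNl oppe0.
case: T T0 cpT => [t| |] // t0 cpT; last first.
  by rewrite addey ?leey// gt_eqF// (lt_le_trans _ (_ : 0 <= maxe _ 0)) ?ltNy0// le_max lexx orbT.
move: p pNy p0 cpT => [r| |] // _ r0 cpT.
case: c cpT => [u| |] cpT //=.
- rewrite -EFinD lee_fin in cpT; rewrite -!EFin_max -EFinD lee_fin.
  have hs : (- u <= Num.max (- u) 0)%R by rewrite le_max lexx.
  have hr : (Num.max (- r) 0 = - r)%R.
    by apply/max_idPl; rewrite lte_fin in r0; lra.
  rewrite hr; lra.
- by rewrite maxye addye ?leey.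
Qed.
Lemma lee_prod_gen (I : Type) (s : seq I) (P : pred I) (f g : I -> \bar R) :
  (forall i, P i -> 0 <= f i <= g i) ->
  \prod_(i <- s | P i) f i <= \prod_(i <- s | P i) g i.
Proof.
move=> fg.
suff /andP[] : 0 <= \prod_(i <- s | P i) f i <= \prod_(i <- s | P i) g i by [].
apply: (big_ind2 (fun x y => 0 <= x <= y)) => //.
- by rewrite lexx andbT.
- move=> x1 x2 y1 y2 /andP[x10 x12] /andP[y10 y12].
  by rewrite mule_ge0//= lee_pmul.
Qed.
End ebounds.

Section marg.
Local Open Scope ereal_scope.
Context (R : realType) (n N : nat).

Lemma marg_int (pi : probability (N.-tuple (n.-tuple R)) R)
  (mu : 'I_N -> probability (n.-tuple R) R) : has_marginals pi mu ->
  forall i (F : n.-tuple R -> \bar R), (forall x, 0 <= F x) ->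
  measurable_fun setT F ->
  \int[mu i]_x F x = \int[pi]_x F (tnth x i).
Proof.
move=> hm i F F0 mF.
have mt : measurable_fun setT (fun x : N.-tuple (n.-tuple R) => tnth x i).
  exact: measurable_tnth.
rewrite (eq_measure_integral (pushforward pi (fun x : N.-tuple (n.-tuple R) => tnth x i))); last first.
  by move=> A mA _; rewrite /pushforward; exact/esym/hm.
rewrite ge0_integral_pushforward//.
Qed.
End marg.

Section main.
Local Open Scope ereal_scope.
Context (R : realType) (n N : nat) (c : N.-tuple (n.-tuple R) -> \bar R)
  (alpha : 'I_N -> R) (m : 'I_N -> {measure set (n.-tuple R) -> \bar R})
  (Phi : 'I_N -> n.-tuple R -> \bar R)
  (mu : 'I_N -> probability (n.-tuple R) R).
Hypotheses (alpha0 : forall i, (0 < alpha i)%R)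
  (mPhi : forall i, measurable_fun setT (Phi i))
  (PhiNy : forall i x, Phi i x != -oo)
  (Zpos : forall i, (0 < Zint alpha m Phi i < +oo)%E)
  (Hmu : forall (i : 'I_N) (A : set (n.-tuple R)), measurable A ->
      mu i A = ((\int[m i]_(x in A) expeR (- ((alpha i)%:E * Phi i x)))
                * ((fine (Zint alpha m Phi i))^-1)%:E)%E).

Definition rho i x := expeR (- ((alpha i)%:E * Phi i x)).
Definition z i := fine (Zint alpha m Phi i).

Lemma ZintE i : Zint alpha m Phi i = (z i)%:E.
Proof.
by have /andP[h1 h2] := Zpos i; rewrite /z fineK// ge0_fin_numE// ltW.
Qed.

Lemma z_gt0 i : (0 < z i)%R.
Proof. by have /andP[h1 _] := Zpos i; rewrite -lte_fin -ZintE. Qed.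

Lemma rho_ge0 i x : 0 <= rho i x. Proof. exact: expeR_ge0. Qed.

Lemma rho_fin i x : rho i x \is a fin_num.
Proof.
rewrite /rho; have := PhiNy i x; case: (Phi i x) => [r| |] //= _.
by rewrite gt0_muley ?lte_fin// ?alpha0.
Qed.

Lemma mrho i : measurable_fun setT (rho i).
Proof.
apply: measurableT_comp; first exact: measurable_expeR.
apply: measurableT_comp; first exact: oppe_measurable.
exact: measurable_funeM.
Qed.

Lemma mu_int i F : (forall x, 0 <= F x) -> measurable_fun setT F ->
  \int[mu i]_x F x = \int[m i]_x (F x * rho i x) * ((z i)^-1)%:E.
Proof.
move=> F0 mF.
have zi0 : (0 <= ((z i)^-1)%:E) by rewrite lee_fin invr_ge0 ltW// z_gt0.
rewrite -ge0_integralZr//; last by move=> x _; rewrite mule_ge0// rho_ge0.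
under [RHS]eq_integral do rewrite -muleA.
apply/esym/(@density_integral _ _ _ (m i) (mu i) (fun x => rho i x * ((z i)^-1)%:E)) => //.
- by move=> x; rewrite mule_ge0// rho_ge0.
- by move=> x; rewrite fin_numM// rho_fin.
- by apply: emeasurable_funM => //; exact: mrho.
- move=> A mA; apply: (@eq_trans _ _ (mu i A)); first by [].
  rewrite Hmu// ge0_integralZr//.
all: try by move=> x _; exact: rho_ge0.
all: try by apply: emeasurable_funM => //; exact: mrho.
all: by apply: measurable_funTS; exact: mrho.
Qed.

Definition G i (V : n.-tuple R -> \bar R) x :=
  expeR ((alpha i)%:E * Phi i x - (alpha i)%:E * V x).

Lemma mG i V : measurable_fun setT V -> measurable_fun setT (G i V).
Proof.
move=> mV; apply: measurableT_comp; first exact: measurable_expeR.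
by apply: emeasurable_funB; exact: measurable_funeM.
Qed.

Lemma G_ge0 i V x : 0 <= G i V x. Proof. exact: expeR_ge0. Qed.

Lemma G_rho_le i V x :
  G i V x * rho i x <= expeR (- ((alpha i)%:E * V x)).
Proof.
rewrite /G /rho; have := PhiNy i x; case: (Phi i x) => [r| |] // _.
  by rewrite -EFinM -expeRD addeAC subee// add0e.
by rewrite gt0_muley ?lte_fin ?alpha0//= mule0 expeR_ge0.
Qed.

Lemma KEY i (V : 'I_N -> n.-tuple R -> \bar R) : measurable_fun setT (V i) ->
  (z i)%:E * \int[mu i]_x G i (V i) x <= Zint alpha m V i.
Proof.
move=> mV; rewrite mu_int//; last first.
  - exact: mG.
  - by move=> x; exact: G_ge0.
rewrite muleCA -EFinM mulfV ?gt_eqF ?z_gt0// mule1.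
apply: ge0_le_integral => //.
- by move=> x _; rewrite mule_ge0// ?G_ge0// rho_ge0.
- by apply: emeasurable_funM; [exact: mG|exact: mrho].
- apply: measurableT_comp; first exact: measurable_expeR.
  apply: measurableT_comp; first exact: oppe_measurable.
  exact: measurable_funeM.
- by move=> x _; exact: G_rho_le.
Qed.


Lemma G_gt0 i V x : V x \is a fin_num -> 0 < G i V x.
Proof.
move=> Vf; rewrite /G; apply: expeR_gt0.
have := PhiNy i x; case: (Phi i x) => [r| |] // _.
  by rewrite -(fineK Vf) -!EFinM -EFinB ltNyr.
by rewrite gt0_muley ?lte_fin ?alpha0// -(fineK Vf) -EFinM.
Qed.

Lemma POS i V : (mu i).-integrable setT V -> 0 < \int[mu i]_x G i V x.
Proof.
move=> hV; have mV := measurable_int _ hV.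
rewrite lt0e integral_ge0 ?andbT; last by move=> x _; exact: G_ge0.
apply/negP => /eqP H0.
have H1 : ae_eq (mu i) setT (G i V) (cst 0).
  apply/ae_eq_integral_abs => //; first exact: mG.
  by under eq_integral do rewrite gee0_abs ?G_ge0//.
have H2 := integrable_ae measurableT hV.
have PF := @ae_properfilter_algebraOfSetsType _ _ _ (mu i).
have : \forall x \ae mu i, False.
  apply: filterS2 H1 H2 => x /(_ I) h1 /(_ I) h2.
  by have := @G_gt0 i V x h2; rewrite h1 ltxx.
move=> hF; apply: (@filter_not_empty _ _ (PF _)) => //.
by apply: (lt_le_trans lte01); rewrite -(probability_setT (mu i)).

Qed.

Lemma Zint_pos_of (V : 'I_N -> n.-tuple R -> \bar R) :
  (forall j, (mu j).-integrable setT (V j)) -> forall j, 0 < Zint alpha m V j.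
Proof.
move=> hV j; apply: (lt_le_trans _ (KEY j V (measurable_int _ (hV j)))).
by rewrite mule_gt0 ?lte_fin ?z_gt0// POS.
Qed.

Lemma BSPhiE : BS alpha m Phi = (\prod_i (z i `^ (alpha i)^-1))%:E.
Proof.
by rewrite /BS -prodEFin; apply: eq_bigr => i _; rewrite ZintE poweR_EFin.
Qed.

Lemma Zint_fin_of (V : 'I_N -> n.-tuple R -> \bar R) :
  (forall j, 0 < Zint alpha m V j) -> BS alpha m V <= BS alpha m Phi ->
  forall i, Zint alpha m V i < +oo.
Proof.
move=> Vpos hBS i; rewrite ltNge leye_eq; apply/negP => /eqP Vi.
move: hBS; rewrite BSPhiE /BS (bigD1 i)//= Vi poweRyr ?invr_neq0 ?gt_eqF ?alpha0//.
rewrite gt0_mulye ?leye_eq//.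
apply: (big_ind (fun x => 0 < x)) => //.
  by move=> x y x0 y0; rewrite mule_gt0.
by move=> j _; rewrite poweR_gt0.
Qed.

Lemma PhiPos i (f : 'I_N -> n.-tuple R -> \bar R) :
  (forall j, (mu j).-integrable setT (f j)) -> admissible c f ->
  BS alpha m f <= BS alpha m Phi ->
  \int[mu i]_x (Phi i)^\+ x < +oo.
Proof.
move=> hf [fNy _] hBS.
have Zf := Zint_fin_of f (Zint_pos_of f hf) hBS i.
have mf := measurable_int _ (hf i).
have hG : \int[mu i]_x G i (f i) x < +oo.
  rewrite ltNge leye_eq; apply/negP => /eqP HI.
  have := KEY i f mf; rewrite HI gt0_muley ?lte_fin ?z_gt0// leye_eq => /eqP.
  by move: Zf => /[swap] ->.
apply: (@le_lt_trans _ _ (\int[mu i]_x ((f i)^\+ x + ((alpha i)^-1)%:E * G i (f i) x))).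
  apply: ge0_le_integral => //.
  - exact: measurable_funepos.
  - apply: emeasurable_funD; first exact: measurable_funepos.
    by apply: measurable_funeM; exact: mG.
  - move=> x _; rewrite !funeposE; apply: ebound1; [exact: alpha0|exact: PhiNy|exact: fNy].
rewrite ge0_integralD//; first last.
all: try by move=> x _; exact: funepos_ge0.
all: try exact: measurable_funepos.
all: try by move=> x _; rewrite mule_ge0 ?G_ge0// lee_fin invr_ge0 ltW.
all: try by apply: measurable_funeM; exact: mG.
rewrite ge0_integralZl//.
all: try exact: mG.
all: try by move=> x _; exact: G_ge0.
all: try by rewrite lee_fin invr_ge0 ltW.
apply: lte_add_pinfty; first by apply: integral_funepos_lt_pinfty => //; exact: hf.
by apply: lte_mul_pinfty => //; rewrite lee_fin invr_ge0 ltW.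
Qed.

Lemma sum_le_pos (V : 'I_N -> n.-tuple R -> \bar R) i (x : N.-tuple (n.-tuple R)) :
  \sum_(j < N) V j (tnth x j) <=
  V i (tnth x i) + \sum_(j < N) (V j)^\+ (tnth x j).
Proof.
rewrite (bigD1 i)//= [X in _ <= _ + X](bigD1 i)//=.
apply: leeD2l; apply: (le_trans _ (leeDr _ _)); last exact: funepos_ge0.
by apply: lee_sum => j _; rewrite funeposE le_max lexx.
Qed.

Lemma PhiNeg i (pi : probability (N.-tuple (n.-tuple R)) R) :
  measurable_fun setT c -> admissible c Phi ->
  has_marginals pi mu -> \int[pi]_x c x \is a fin_num ->
  (forall j, \int[mu j]_x (Phi j)^\+ x < +oo) ->
  \int[mu i]_x (Phi i)^\- x < +oo.
Proof.
move=> mc [_ adm] hm cfin hpos.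
have mPt j : measurable_fun setT (fun x : N.-tuple (n.-tuple R) => Phi j (tnth x j)).
  by apply: measurableT_comp => //; exact: measurable_tnth.
rewrite (@marg_int R n N pi mu hm); last 2 first.
  - by move=> x; exact: funeneg_ge0.
  - exact: measurable_funeneg.
apply: (@le_lt_trans _ _ (\int[pi]_x (c^\- x + \sum_(j < N) (Phi j)^\+ (tnth x j)))).
  apply: ge0_le_integral => //.
  - by apply: measurableT_comp; [exact: measurable_funeneg|exact: measurable_tnth].
  - apply: emeasurable_funD; first exact: measurable_funeneg.
    by apply: emeasurable_sum => j; apply: measurableT_comp;
      [exact: measurable_funepos|exact: measurable_tnth].
  - move=> x _; rewrite !funenegE; apply: ebound2.
    + exact: PhiNy.
    + by apply: sume_ge0 => j _; exact: funepos_ge0.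
    + exact: (le_trans (adm x) (sum_le_pos Phi i x)).
rewrite ge0_integralD//; first last.
all: try by move=> x _; exact: funeneg_ge0.
all: try exact: measurable_funeneg.
all: try by move=> x _; apply: sume_ge0 => j _; exact: funepos_ge0.
all: try by apply: emeasurable_sum => j; apply: measurableT_comp;
      [exact: measurable_funepos|exact: measurable_tnth].
rewrite ge0_integral_sum//; first last.
all: try by move=> j x _; exact: funepos_ge0.
all: try by move=> j; apply: measurableT_comp;
      [exact: measurable_funepos|exact: measurable_tnth].
apply: lte_add_pinfty.
  move: cfin; rewrite [X in X \is a fin_num]integralE fin_numB => /andP[_].
  by rewrite ge0_fin_numE// integral_ge0// => x _; exact: funeneg_ge0.
apply: lte_sum_pinfty => j _.
rewrite -(@marg_int R n N pi mu hm)//; last exact: measurable_funepos.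
Qed.

Lemma PhiInt i : (\int[mu i]_x (Phi i)^\+ x < +oo) ->
  (\int[mu i]_x (Phi i)^\- x < +oo) -> (mu i).-integrable setT (Phi i).
Proof.
move=> hp hn; apply/integrableP; split; first exact: mPhi.
rewrite (_ : (fun x => `|Phi i x|) = (fun x => (Phi i)^\+ x + (Phi i)^\- x)); last first.
  by apply: funext => x; have := congr1 (fun f => f x) (fune_abse (Phi i)).
rewrite ge0_integralD//; first last.
all: try by move=> x _; exact: funeneg_ge0.
all: try exact: measurable_funeneg.
all: try by move=> x _; exact: funepos_ge0.
all: try exact: measurable_funepos.
exact: lte_add_pinfty.
Qed.

Lemma JEN i (V : n.-tuple R -> \bar R) : (mu i).-integrable setT (Phi i) ->
  (mu i).-integrable setT V ->
  (expR (- (alpha i * (fine (\int[mu i]_x V x) - fine (\int[mu i]_x Phi i x)))))%:E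
    <= \int[mu i]_x G i V x.
Proof.
move=> hP hV.
set p := fine (\int[mu i]_x Phi i x); set q := fine (\int[mu i]_x V x).
set a := (q - p)%R; set k := expR (- (alpha i * a)).
have pE : \int[mu i]_x Phi i x = p%:E by rewrite fineK// integrable_fin_num.
have qE : \int[mu i]_x V x = q%:E by rewrite fineK// integrable_fin_num.
pose h x := (alpha i)%:E * Phi i x - (alpha i)%:E * V x.
have hi : (mu i).-integrable setT h.
  by apply: integrableB => //; exact: integrableZl.
have ci : (mu i).-integrable setT (EFin \o cst (1 + alpha i * a)%R).
  exact: finite_measure_integrable_cst.
pose J x := k%:E * ((1 + alpha i * a)%:E + h x).
have Ji0 : (mu i).-integrable setT (fun x => (1 + alpha i * a)%:E + h x).
  exact: (integrableD _ ci hi).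
have Ji : (mu i).-integrable setT J by exact: integrableZl.
have JE : \int[mu i]_x J x = k%:E.
  rewrite /J integralZl// (integralD _ ci hi)//.
  rewrite /h (integralB _ (@integrableZl _ _ _ (mu i) setT measurableT (alpha i) _ hP) (@integrableZl _ _ _ (mu i) setT measurableT (alpha i) _ hV))//.
  rewrite !integralZl// pE qE.
  rewrite (_ : \int[mu i]_x (EFin \o cst (1 + alpha i * a)%R) x = (1 + alpha i * a)%:E).
    rewrite -!EFinM /a; congr (_%:E).
    by rewrite (_ : (1 + alpha i * (q - p) + (alpha i * p - alpha i * q) = 1)%R) ?mulr1//; ring.
  rewrite (eq_integral (cst (1 + alpha i * a)%:E))// integral_cst//.
  rewrite [X in _ * X](_ : _ = 1) ?mule1//.
  exact: probability_setT.
have JG x : J x <= G i V x.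
  rewrite /J /G -/(h x); case: (h x) => [r| |].
  - rewrite -EFinD -EFinM /= lee_fin.
    have e1 := expR_ge1Dx (r + alpha i * a).
    have -> : expR r = (k * expR (r + alpha i * a))%R.
      by rewrite /k -expRD; congr expR; ring.
    by rewrite ler_wpM2l ?expR_ge0//; lra.
  - by rewrite leey.
  - by rewrite /= gt0_muleNy ?lte_fin ?expR_gt0// leNye.
rewrite -JE integralE.
rewrite leeBlDr; last exact: integrable_neg_fin_num.
apply: (le_trans _ (leeDl _ _)); last by apply: integral_ge0 => x _; exact: funeneg_ge0.
apply: ge0_le_integral => //.
- by apply: measurable_funepos; exact: (measurable_int _ Ji).
- apply: measurableT_comp; first exact: measurable_expeR.
  exact: (measurable_int _ hi).
- by move=> x _; rewrite funeposE ge_max JG G_ge0.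
Qed.

Lemma dual_le (g : 'I_N -> n.-tuple R -> \bar R) :
  (forall V : 'I_N -> n.-tuple R -> \bar R,
      (forall i, measurable_fun setT (V i)) -> admissible c V ->
      BS alpha m V <= BS alpha m Phi) ->
  (forall i, (mu i).-integrable setT (Phi i)) -> dual_feasible c mu g ->
  dual_value mu Phi <= dual_value mu g.
Proof.
move=> maxBS hP [gadm hg].
pose p i := fine (\int[mu i]_x Phi i x).
pose q i := fine (\int[mu i]_x g i x).
pose a i := (q i - p i)%R.
have pE i : \int[mu i]_x Phi i x = (p i)%:E.
  by rewrite /p fineK//; apply: integrable_fin_num => //; exact: hP.
have qE i : \int[mu i]_x g i x = (q i)%:E.
  by rewrite /q fineK//; apply: integrable_fin_num => //; exact: hg.
have C1 i : (z i * expR (- (alpha i * a i)))%:E <= Zint alpha m g i.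
  apply: le_trans (KEY i g (measurable_int _ (hg i))).
  rewrite EFinM; apply: lee_wpmul2l; first by rewrite lee_fin ltW// z_gt0.
  exact: JEN.
have hBS := maxBS g (fun i => measurable_int _ (hg i)) gadm.
have C2 : (\prod_i (z i `^ (alpha i)^-1 * expR (- a i)))%:E <= BS alpha m g.
  rewrite -prodEFin /BS.
  apply: lee_prod_gen => i _; apply/andP; split.
    by rewrite lee_fin mulr_ge0 ?powR_ge0 ?expR_ge0.
  have -> : expR (- a i) = (expR (- (alpha i * a i)) `^ (alpha i)^-1)%R.
    rewrite -expRM; congr expR.
    by rewrite mulNr mulrC mulrA mulVf ?gt_eqF ?alpha0// mul1r.
  rewrite -powRM; last 2 first.
    - exact/ltW/z_gt0.
    - exact: expR_ge0.
  rewrite -poweR_EFin.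
  have h0 : (0 <= z i * expR (- (alpha i * a i)))%R.
    by rewrite mulr_ge0 ?expR_ge0//; exact/ltW/z_gt0.
  apply: gt0_ler_poweR.
  + by rewrite invr_ge0; exact/ltW/alpha0.
  + by rewrite in_itv/= leey lee_fin h0.
  + by rewrite in_itv/= leey andbT; apply: (le_trans _ (C1 i)); rewrite lee_fin.
  + exact: C1.
have := le_trans C2 hBS; rewrite BSPhiE lee_fin big_split /= -expR_sum.
rewrite ger_pMr; last by apply: prodr_gt0 => i _; rewrite powR_gt0// z_gt0.
rewrite expR_le1 sumrN oppr_le0 => ha.
rewrite /dual_value (eq_bigr _ (fun i _ => pE i)) (eq_bigr _ (fun i _ => qE i)).
rewrite !sumEFin lee_fin -subr_ge0 -sumrB.
exact: ha.
Qed.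

Lemma main_res : measurable_fun setT c -> admissible c Phi ->
  (forall V : 'I_N -> n.-tuple R -> \bar R,
      (forall i, measurable_fun setT (V i)) -> admissible c V ->
      BS alpha m V <= BS alpha m Phi) ->
  kantorovich_duality c mu -> dual_minimizer c mu Phi.
Proof.
move=> mc adm maxBS [pi [f [[hm _] [[fadm fint] _] _ hfin]]].
have hBSf := maxBS f (fun i => measurable_int _ (fint i)) fadm.
have hpos j := PhiPos j f fint fadm hBSf.
have hneg j := PhiNeg j pi mc adm hm hfin hpos.
have hint j := PhiInt j (hpos j) (hneg j).
split; first by split.
by move=> g hg; exact: dual_le.
Qed.

End main.

Theorem corollary2p2 (R : realType) (n N : nat)
  (c : N.-tuple (n.-tuple R) -> \bar R)
  (alpha : 'I_N -> R)
  (m : 'I_N -> {measure set (n.-tuple R) -> \bar R})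
  (Phi : 'I_N -> n.-tuple R -> \bar R)
  (mu : 'I_N -> probability (n.-tuple R) R) :
  measurable_fun setT c ->
  (forall i, 0 < alpha i) ->
  (forall i, measurable_fun setT (Phi i)) ->
  admissible c Phi ->
  (forall V : 'I_N -> n.-tuple R -> \bar R,
      (forall i, measurable_fun setT (V i)) -> admissible c V ->
      (BS alpha m V <= BS alpha m Phi)%E) ->
  (forall i, (0 < Zint alpha m Phi i < +oo)%E) ->
  (forall (i : 'I_N) (A : set (n.-tuple R)), measurable A ->
      mu i A = ((\int[m i]_(x in A) expeR (- ((alpha i)%:E * Phi i x)))
                * ((fine (Zint alpha m Phi i))^-1)%:E)%E) ->
  kantorovich_duality c mu ->
  dual_minimizer c mu Phi.
Proof.
move=> mc a0 mP adm maxBS Zp Hm kd.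

exact: (@main_res R n N c alpha m Phi mu a0 mP adm.1 Zp Hm mc adm maxBS kd).
Qed.
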